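(* Let $\gamma,h>0$, $\eta=e^{-\gamma h}$, $n\ge1$, and for $k\in\{0,\dots,n\}$ define \[ \alpha_k=(1-\eta^2)(1-\eta^{2n})k-2\eta(1+\eta^{n-k})(1-\eta^k)(1-\eta^n), \] \[ \beta_k=(1-\eta^2)\Bigl(\eta^{-k}(1-\eta^k)^2n+(1-\eta^n)^2k\Bigr)-2\eta^{1-k}(1-\eta^k)(1-\eta^n)(2-\eta^k-\eta^n). \] Then both $(\alpha_k)_{0\le k\le n}$ and $(\beta_k)_{0\le k\le n}$ are nondecreasing sequences. *)

(* Defs.v *)
From Stdlib Require Import Reals Lra Lia.
Open Scope R_scope.

(* alpha_k with eta, n, k ; eta^{n-k} is well defined since k <= n (nat subtraction). *)
Definition alpha (eta : R) (n k : nat) : R :=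
  (1 - eta ^ 2) * (1 - eta ^ (2 * n)) * INR k
  - 2 * eta * (1 + eta ^ (n - k)) * (1 - eta ^ k) * (1 - eta ^ n).

(* eta^{-k} = / eta^k and eta^{1-k} = eta / eta^k  (eta > 0). *)
Definition beta (eta : R) (n k : nat) : R :=
  (1 - eta ^ 2) * ( / (eta ^ k) * (1 - eta ^ k) ^ 2 * INR n
                    + (1 - eta ^ n) ^ 2 * INR k)
  - 2 * (eta / (eta ^ k)) * (1 - eta ^ k) * (1 - eta ^ n)
      * (2 - eta ^ k - eta ^ n).

(* Main.v *)
Require Import Defs.
From Stdlib Require Import Reals Lra Lia Psatz.
Open Scope R_scope.
Ltac posi := match goal with
 | |- 0 <= _ + _ => apply Rplus_le_le_0_compat; posi
 | |- 0 <= _ * _ => apply Rmult_le_pos; posi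
 | |- 0 <= _ ^ _ => apply pow_le; posi
 | _ => lra end.
Definition Zexp (e x : R) : R := (1) + (1)*x^1 + (-1)*e^1*x^1 + (1)*e^1*x^2 + (-1)*e^2 + (-7)*e^2*x^1 + (-4)*e^2*x^2 + (-2)*e^2*x^3 + (7)*e^3*x^1 + (8)*e^3*x^2 + (2)*e^3*x^3 + (1)*e^3*x^4 + (-2)*e^4*x^2 + (1)*e^4*x^3 + (-1)*e^4*x^4 + (-3)*e^5*x^2 + (-1)*e^5*x^3 + (-1)*e^6*x^3 + (-1)*e^6*x^4 + (1)*e^7*x^3 + (1)*e^7*x^4.
Lemma Zpos e x : 0<=e<=1 -> 0<=x<=1 -> 0 <= Zexp e x.
Proof. intros. unfold Zexp. match goal with |- 0 <= ?L => replace L with ((1)*(e^0*(1-e)^7)*(x^0*(1-x)^4) + (5)*(e^0*(1-e)^7)*(x^1*(1-x)^3) + (9)*(e^0*(1-e)^7)*(x^2*(1-x)^2) + (7)*(e^0*(1-e)^7)*(x^3*(1-x)^1) + (2)*(e^0*(1-e)^7)*(x^4*(1-x)^0) + (7)*(e^1*(1-e)^6)*(x^0*(1-x)^4) + (34)*(e^1*(1-e)^6)*(x^1*(1-x)^3) + (61)*(e^1*(1-e)^6)*(x^2*(1-x)^2) + (48)*(e^1*(1-e)^6)*(x^3*(1-x)^1) + (14)*(e^1*(1-e)^6)*(x^4*(1-x)^0) + (20)*(e^2*(1-e)^5)*(x^0*(1-x)^4) + (88)*(e^2*(1-e)^5)*(x^1*(1-x)^3) + (146)*(e^2*(1-e)^5)*(x^2*(1-x)^2)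 + (106)*(e^2*(1-e)^5)*(x^3*(1-x)^1) + (28)*(e^2*(1-e)^5)*(x^4*(1-x)^0) + (30)*(e^3*(1-e)^4)*(x^0*(1-x)^4) + (112)*(e^3*(1-e)^4)*(x^1*(1-x)^3) + (159)*(e^3*(1-e)^4)*(x^2*(1-x)^2) + (94)*(e^3*(1-e)^4)*(x^3*(1-x)^1) + (18)*(e^3*(1-e)^4)*(x^4*(1-x)^0) + (25)*(e^4*(1-e)^3)*(x^0*(1-x)^4) + (73)*(e^4*(1-e)^3)*(x^1*(1-x)^3) + (79)*(e^4*(1-e)^3)*(x^2*(1-x)^2) + (28)*(e^4*(1-e)^3)*(x^3*(1-x)^1) + (11)*(e^5*(1-e)^2)*(x^0*(1-x)^4) + (22)*(e^5*(1-e)^2)*(x^1*(1-x)^3) + (14)*(e^5*(1-e)^2)*(x^2*(1-x)^2) + (2)*(e^6*(1-e)^1)*(x^0*(1-x)^4) + (2)*(e^6*(1-e)^1)*(x^1*(1-x)^3)) by ring end. posi. Qed.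
Definition Hexp (e x b : R) : R := (1) + (1)*e^1 + (-1)*e^1*x^2 + (-6)*e^2*x^1*b^1 + (-1)*e^2*x^2 + (2)*e^2*x^2*b^1 + (2)*e^3*x^2*b^1 + (2)*e^3*x^2*b^2 + (2)*e^3*x^3*b^1 + (-1)*e^3*x^3*b^2 + (2)*e^4*x^2*b^2 + (-2)*e^4*x^3*b^2 + (-1)*e^5*x^3*b^2.
Lemma Hpos e x b : 0<=e<=1 -> 0<=x<=1 -> 0<=b<=1 -> 0 <= Hexp e x b.
Proof. intros. unfold Hexp. match goal with |- 0 <= ?L => replace L with ((1)*(e^0*(1-e)^5)*(x^0*(1-x)^3)*(b^0*(1-b)^2) + (2)*(e^0*(1-e)^5)*(x^0*(1-x)^3)*(b^1*(1-b)^1) + (1)*(e^0*(1-e)^5)*(x^0*(1-x)^3)*(b^2*(1-b)^0) + (3)*(e^0*(1-e)^5)*(x^1*(1-x)^2)*(b^0*(1-b)^2) + (6)*(e^0*(1-e)^5)*(x^1*(1-x)^2)*(b^1*(1-b)^1) + (3)*(e^0*(1-e)^5)*(x^1*(1-x)^2)*(b^2*(1-b)^0) + (3)*(e^0*(1-e)^5)*(x^2*(1-x)^1)*(b^0*(1-b)^2) + (6)*(e^0*(1-e)^5)*(x^2*(1-x)^1)*(b^1*(1-b)^1) + (3)*(e^0*(1-e)^5)*(x^2*(1-x)^1)*(b^2*(1-b)^0) + (1)*(e^0*(1-e)^5)*(x^3*(1-x)^0)*(b^0*(1-b)^2) + (2)*(e^0*(1-e)^5)*(x^3*(1-x)^0)*(b^1*(1-b)^1)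 + (1)*(e^0*(1-e)^5)*(x^3*(1-x)^0)*(b^2*(1-b)^0) + (6)*(e^1*(1-e)^4)*(x^0*(1-x)^3)*(b^0*(1-b)^2) + (12)*(e^1*(1-e)^4)*(x^0*(1-x)^3)*(b^1*(1-b)^1) + (6)*(e^1*(1-e)^4)*(x^0*(1-x)^3)*(b^2*(1-b)^0) + (18)*(e^1*(1-e)^4)*(x^1*(1-x)^2)*(b^0*(1-b)^2) + (36)*(e^1*(1-e)^4)*(x^1*(1-x)^2)*(b^1*(1-b)^1) + (18)*(e^1*(1-e)^4)*(x^1*(1-x)^2)*(b^2*(1-b)^0) + (17)*(e^1*(1-e)^4)*(x^2*(1-x)^1)*(b^0*(1-b)^2) + (34)*(e^1*(1-e)^4)*(x^2*(1-x)^1)*(b^1*(1-b)^1) + (17)*(e^1*(1-e)^4)*(x^2*(1-x)^1)*(b^2*(1-b)^0) + (5)*(e^1*(1-e)^4)*(x^3*(1-x)^0)*(b^0*(1-b)^2) + (10)*(e^1*(1-e)^4)*(x^3*(1-x)^0)*(b^1*(1-b)^1) + (5)*(e^1*(1-e)^4)*(x^3*(1-x)^0)*(b^2*(1-b)^0) + (14)*(e^2*(1-e)^3)*(x^0*(1-x)^3)*(b^0*(1-b)^2) + (28)*(e^2*(1-e)^3)*(x^0*(1-x)^3)*(b^1*(1-b)^1) + (14)*(e^2*(1-e)^3)*(x^0*(1-x)^3)*(b^2*(1-b)^0) + (42)*(e^2*(1-e)^3)*(x^1*(1-x)^2)*(b^0*(1-b)^2) + (78)*(e^2*(1-e)^3)*(x^1*(1-x)^2)*(b^1*(1-b)^1)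 + (36)*(e^2*(1-e)^3)*(x^1*(1-x)^2)*(b^2*(1-b)^0) + (37)*(e^2*(1-e)^3)*(x^2*(1-x)^1)*(b^0*(1-b)^2) + (64)*(e^2*(1-e)^3)*(x^2*(1-x)^1)*(b^1*(1-b)^1) + (27)*(e^2*(1-e)^3)*(x^2*(1-x)^1)*(b^2*(1-b)^0) + (9)*(e^2*(1-e)^3)*(x^3*(1-x)^0)*(b^0*(1-b)^2) + (14)*(e^2*(1-e)^3)*(x^3*(1-x)^0)*(b^1*(1-b)^1) + (5)*(e^2*(1-e)^3)*(x^3*(1-x)^0)*(b^2*(1-b)^0) + (16)*(e^3*(1-e)^2)*(x^0*(1-x)^3)*(b^0*(1-b)^2) + (32)*(e^3*(1-e)^2)*(x^0*(1-x)^3)*(b^1*(1-b)^1) + (16)*(e^3*(1-e)^2)*(x^0*(1-x)^3)*(b^2*(1-b)^0) + (48)*(e^3*(1-e)^2)*(x^1*(1-x)^2)*(b^0*(1-b)^2) + (78)*(e^3*(1-e)^2)*(x^1*(1-x)^2)*(b^1*(1-b)^1) + (30)*(e^3*(1-e)^2)*(x^1*(1-x)^2)*(b^2*(1-b)^0) + (39)*(e^3*(1-e)^2)*(x^2*(1-x)^1)*(b^0*(1-b)^2) + (50)*(e^3*(1-e)^2)*(x^2*(1-x)^1)*(b^1*(1-b)^1) + (13)*(e^3*(1-e)^2)*(x^2*(1-x)^1)*(b^2*(1-b)^0) + (7)*(e^3*(1-e)^2)*(x^3*(1-x)^0)*(b^0*(1-b)^2) + (6)*(e^3*(1-e)^2)*(x^3*(1-x)^0)*(b^1*(1-b)^1)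 + (9)*(e^4*(1-e)^1)*(x^0*(1-x)^3)*(b^0*(1-b)^2) + (18)*(e^4*(1-e)^1)*(x^0*(1-x)^3)*(b^1*(1-b)^1) + (9)*(e^4*(1-e)^1)*(x^0*(1-x)^3)*(b^2*(1-b)^0) + (27)*(e^4*(1-e)^1)*(x^1*(1-x)^2)*(b^0*(1-b)^2) + (36)*(e^4*(1-e)^1)*(x^1*(1-x)^2)*(b^1*(1-b)^1) + (9)*(e^4*(1-e)^1)*(x^1*(1-x)^2)*(b^2*(1-b)^0) + (20)*(e^4*(1-e)^1)*(x^2*(1-x)^1)*(b^0*(1-b)^2) + (14)*(e^4*(1-e)^1)*(x^2*(1-x)^1)*(b^1*(1-b)^1) + (2)*(e^4*(1-e)^1)*(x^3*(1-x)^0)*(b^0*(1-b)^2) + (2)*(e^5*(1-e)^0)*(x^0*(1-x)^3)*(b^0*(1-b)^2) + (4)*(e^5*(1-e)^0)*(x^0*(1-x)^3)*(b^1*(1-b)^1) + (2)*(e^5*(1-e)^0)*(x^0*(1-x)^3)*(b^2*(1-b)^0) + (6)*(e^5*(1-e)^0)*(x^1*(1-x)^2)*(b^0*(1-b)^2) + (6)*(e^5*(1-e)^0)*(x^1*(1-x)^2)*(b^1*(1-b)^1) + (4)*(e^5*(1-e)^0)*(x^2*(1-x)^1)*(b^0*(1-b)^2)) by ring end. posi. Qed.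
Lemma pow_le1 e n : 0 <= e <= 1 -> e^n <= 1.
Proof. intros. induction n; simpl. lra. assert (0 <= e^n) by (apply pow_le; lra). nra. Qed.

Definition F e N c x := (1-e^2)*N*(1-e*x^2) + (1+e)*(1-c)^2*e*x - 2*e*(1-c)*(2-c) + 2*e^2*(1-c)*x^2.
Definition Hf e x c := (1+e)*(1-e*x^2) + (1+e)*e*x*c*(2-(1+e)*c) - 2*e*c*(3-(1+e)*c) + 2*e^2*x^2*c.
Definition Rp e x := (1+e)*(1-e*x)^2*e*x - 2*e*(1-e*x)*(2-e*x) + 2*e^2*(1-e*x)*x^2.

Lemma Zeq e x : (1+x)*((1-e*e)*(1-e^3*x*x)+Rp e (e*x)-Rp e x)+2*(1-e*e)*(1+e)*e*x*x*(1-e*x) = Zexp e x.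
Proof. unfold Rp, Zexp. ring. Qed.
Lemma Heq e x b : Hf e x (e*x*b) = Hexp e x b.
Proof. unfold Hf, Hexp. ring. Qed.

Lemma L1 e M : 0<e<1 -> INR (S M) * (1-e) * e^M <= 1 - e^(S M).
Proof. intros He. induction M. simpl. lra.
 replace (INR (S (S M))) with (INR (S M) + 1) by (rewrite (S_INR (S M)); ring).
 replace (e^(S (S M))) with (e*e^(S M)) by (simpl; ring).
 replace (e^(S M)) with (e*e^M) in * by (simpl; ring).
 assert (0 < e^M) by (apply pow_lt; lra).
 set (N := INR (S M)) in *. set (y := e^M) in *.
 assert (0 <= N) by (unfold N; apply pos_INR).
 assert (0 <= (1-e)*y*(1-e)) by (apply Rmult_le_pos; [apply Rmult_le_pos|]; lra).
 assert (N * (1-e) * (e*y) <= N * (1-e) * y).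
 { assert (0 <= N * (1-e)) by (apply Rmult_le_pos; lra).
   apply Rmult_le_compat_l; [lra|]. nra. }
 nra. Qed.

Lemma L2 e M : 0<e<1 -> 2*(1 - e^(S M)) <= INR (S M) * (1-e) * (1 + e^M).
Proof. intros He. induction M. simpl. lra.
 pose proof (L1 e M He) as H1.
 assert (0 <= (1-e)*(1 - e^(S M) - INR (S M)*(1-e)*e^M)) by (apply Rmult_le_pos; lra).
 replace (INR (S (S M))) with (INR (S M) + 1) by (rewrite (S_INR (S M)); ring).
 replace (e^(S (S M))) with (e*e^(S M)) by (simpl; ring).
 replace (e^(S M)) with (e*e^M) in * by (simpl; ring).
 set (N := INR (S M)) in *. set (y := e^M) in *.
 nra. Qed.

Lemma P_pos e k : 0<e<1 -> 0 <= F e (INR (S k)) (e^(S k)) (e^k).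
Proof. intros He. induction k.
 - simpl. unfold F. replace ((1 - e ^ 2) * 1 * (1 - e * 1 ^ 2) + (1 + e) * (1 - e * 1) ^ 2 * e * 1 -
 2 * e * (1 - e * 1) * (2 - e * 1) + 2 * e ^ 2 * (1 - e * 1) * 1 ^ 2) with ((1-e)^4) by ring.
   apply pow_le; lra.
 - pose proof (L2 e k He) as H2.
   assert (Hx : 0 < e^k <= 1) by (split; [apply pow_lt|apply pow_le1]; lra).
   pose proof (Zpos e (e^k) ltac:(lra) ltac:(lra)) as HZ. rewrite <- Zeq in HZ.
   replace (INR (S (S k))) with (INR (S k) + 1) in * by (rewrite (S_INR (S k)); ring).
   replace (e^(S (S k))) with (e*e*e^k) by (simpl; ring).
   replace (e^(S k)) with (e*e^k) in * by (simpl; ring).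
   set (x := e^k) in *. set (N := INR (S k)) in *.
   assert (0 <= (1-e^2)*(1+e)*e*x^2*(N*(1-e)*(1+x) - 2*(1-e*x))).
   { apply Rmult_le_pos; [|lra]. apply Rmult_le_pos; [|apply pow_le; lra].
     apply Rmult_le_pos; [|lra]. apply Rmult_le_pos; nra. }
   assert (Id : (1+x)*(F e (N+1) (e*e*x) (e*x) - F e N (e*x) x) =
     (1+x)*((1-e*e)*(1-e^3*x*x)+Rp e (e*x)-Rp e x)+2*(1-e*e)*(1+e)*e*x*x*(1-e*x)
     + (1-e^2)*(1+e)*e*x^2*(N*(1-e)*(1+x) - 2*(1-e*x))).
   { unfold F, Rp. ring. }
   assert (0 <= (1+x)*(F e (N+1) (e*e*x) (e*x) - F e N (e*x) x)) by lra.
   assert (0 <= F e (N+1) (e*e*x) (e*x) - F e N (e*x) x).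
   { apply (Rmult_le_reg_l (1+x)); lra. }
   lra.
Qed.

Lemma G_pos e k m : 0<e<1 -> 0 <= F e (INR (S k + m)) (e^(S k + m)) (e^k).
Proof. intros He. induction m.
 - rewrite Nat.add_0_r. apply P_pos; exact He.
 - replace (S k + S m)%nat with (S (S k + m)) by lia.
   rewrite S_INR. replace (e^(S (S k + m))) with (e * e^(S k + m)) by (simpl; ring).
   assert (Hx : 0 < e^k <= 1) by (split; [apply pow_lt|apply pow_le1]; lra).
   assert (Hb : 0 < e^m <= 1) by (split; [apply pow_lt|apply pow_le1]; lra).
   assert (Hc : e^(S k + m) = e * e^k * e^m) by (rewrite pow_add; simpl; ring).
   pose proof (Hpos e (e^k) (e^m) ltac:(lra) ltac:(lra) ltac:(lra)) as HH.
   rewrite <- Heq, <- Hc in HH.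
   set (x := e^k) in *. set (c := e^(S k + m)) in *. set (N := INR (S k + m)) in *.
   assert (F e (N+1) (e*c) x - F e N c x = (1-e) * Hf e x c) by (unfold F, Hf; ring).
   assert (0 <= (1-e) * Hf e x c) by (apply Rmult_le_pos; lra).
   lra.
Qed.

Lemma bern e n : 0<e<1 -> 1 - e^n <= INR n * (1-e).
Proof. intros. induction n. simpl; lra.
 rewrite S_INR. simpl. assert (e^n <= 1) by (apply pow_le1; lra). nra. Qed.

Lemma alpha_step e n k : 0<e<1 -> (S k <= n)%nat -> alpha e n k <= alpha e n (S k).
Proof. intros He Hk. destruct (Nat.le_exists_sub (S k) n Hk) as [m [Hm _]].
 rewrite Nat.add_comm in Hm. subst n. unfold alpha.
 replace (S k + m - S k)%nat with m by lia. replace (S k + m - k)%nat with (S m) by lia.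
 replace (2 * (S k + m))%nat with ((S k + m) + (S k + m))%nat by lia.
 rewrite !pow_add. rewrite <- !tech_pow_Rmult. rewrite S_INR.
 assert (0 < e^k <= 1) by (split; [apply pow_lt|apply pow_le1]; lra).
 assert (0 < e^m <= 1) by (split; [apply pow_lt|apply pow_le1]; lra).
 set (a := e^k) in *. set (b := e^m) in *.
 assert (0 <= (1-a)*(1-b)) by nra.
 assert (0 <= a*b <= 1) by (split; nra).
 assert (e*a*b <= 1) by (rewrite Rmult_assoc; nra).
 assert (0 <= (1-e)*(1-e*a*b)) by (apply Rmult_le_pos; lra).
 assert (0 <= (1+e)*(1+e*a*b) - 2*e*(a+b)) by nra.
 assert (0 <= (1-e)*(1-e*a*b)*((1+e)*(1+e*a*b) - 2*e*(a+b))).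
 { apply Rmult_le_pos; nra. }
 match goal with |- ?L <= ?R => assert (R - L = (1-e)*(1-e*a*b)*((1+e)*(1+e*a*b) - 2*e*(a+b))) by ring end.
 lra.
Qed.

Lemma beta_step e n k : 0<e<1 -> (S k <= n)%nat -> beta e n k <= beta e n (S k).
Proof. intros He Hk. destruct (Nat.le_exists_sub (S k) n Hk) as [m [Hm _]].
 rewrite Nat.add_comm in Hm. subst n.
 pose proof (G_pos e k m He) as HG.
 assert (Hx : 0 < e^k <= 1) by (split; [apply pow_lt|apply pow_le1]; lra).
 unfold beta. replace (e^(S k)) with (e*e^k) by (simpl; ring). rewrite S_INR.
 set (x := e^k) in *. set (c := e^(S k + m)) in *. set (N := INR (S k + m)) in *.
 assert (0 <= (1-e)/(e*x) * F e N c x).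
 { apply Rmult_le_pos; [|exact HG]. unfold Rdiv; apply Rmult_le_pos; [lra | left; apply Rinv_0_lt_compat; nra]. }
 match goal with |- ?L <= ?R => assert (R - L = (1-e)/(e*x) * F e N c x) end.
 { unfold F. field. split; lra. }
 lra.
Qed.

Lemma mono (f : nat -> R) n : (forall k, (S k <= n)%nat -> f k <= f (S k)) ->
  forall j k, (j <= k)%nat -> (k <= n)%nat -> f j <= f k.
Proof. intros Hs j k Hjk. induction Hjk; intros. lra.
 specialize (Hs m H). specialize (IHHjk ltac:(lia)). lra. Qed.

Theorem mainTheorem18 (gamma h : R) (n : nat) :
  0 < gamma -> 0 < h -> (1 <= n)%nat ->
  let eta := exp (- (gamma * h)) in
  (forall j k : nat, (j <= k)%nat -> (k <= n)%nat ->
     alpha eta n j <= alpha eta n k) /\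
  (forall j k : nat, (j <= k)%nat -> (k <= n)%nat ->
     beta eta n j <= beta eta n k).
Proof. intros Hg Hh Hn eta.
 assert (He : 0 < eta < 1).
 { unfold eta. split. apply exp_pos. rewrite <- exp_0. apply exp_increasing. nra. }
 split; apply mono; intros; [apply alpha_step|apply beta_step]; assumption.
Qed.
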